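(* Let $R$ be a ring with identity and an involution $*$, and let $a\in R$. Then: (i) $a$ is left $(a^*,1)$-invertible if and only if $a$ has a $\{1,4\}$-inverse; (ii) $a$ is right $(1,a^* )$-invertible if and only if $a$ has a $\{1,3\}$-inverse; (iii) $a$ is Moore–Penrose invertible if and only if $a$ is left $(a^*,1)$-invertible and right $(1,a^* )$-invertible.
   Context: An involution is a map $*:R\to R$ with $(x^* )^*=x$, $(xy)^*=y^*x^*$, $(x+y)^*=x^*+y^*$. For $x\in R$: $xR=\{xr:r\in R\}$, $Rx=\{rx:r\in R\}$. For $a,b,c\in R$, $a$ is left $(b,c)$-invertible if there is $y$ with $Ry\subseteq Rc$ and $yab=b$; right $(b,c)$-invertible if there is $y$ with $yR\subseteq bR$ and $cay=c$. A $\{1,3\}$-inverse of $a$ is $y$ with $aya=a$ and $(ay)^*=ay$; a $\{1,4\}$-inverse is $y$ with $aya=a$ and $(ya)^*=ya$; $a$ is Moore–Penrose invertible if there is $y$ with $aya=a$, $yay=y$, $(ay)^*=ay$, $(ya)^*=ya$. *)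

(* Defs.v *)
From mathcomp Require Import all_boot all_algebra.
Set Implicit Arguments. Unset Strict Implicit. Unset Printing Implicit Defensive.
Import GRing.Theory.
Local Open Scope ring_scope.

Definition involution (R : pzRingType) (inv : R -> R) : Prop :=
  (forall x, inv (inv x) = x) /\
  (forall x y, inv (x * y) = inv y * inv x) /\
  (forall x y, inv (x + y) = inv x + inv y).

(* Principal one-sided ideal inclusions: Rx <= Ry and xR <= yR. *)
Definition lsub (R : pzRingType) (x y : R) : Prop :=
  forall r : R, exists s : R, r * x = s * y.
Definition rsub (R : pzRingType) (x y : R) : Prop :=
  forall r : R, exists s : R, x * r = y * s.

Definition left_bc_invertible (R : pzRingType) (a b c : R) : Prop :=
  exists y : R, lsub y c /\ y * a * b = b.
Definition right_bc_invertible (R : pzRingType) (a b c : R) : Prop :=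
  exists y : R, rsub y b /\ c * a * y = c.

Definition inverse13 (R : pzRingType) (inv : R -> R) (a y : R) : Prop :=
  a * y * a = a /\ inv (a * y) = a * y.
Definition inverse14 (R : pzRingType) (inv : R -> R) (a y : R) : Prop :=
  a * y * a = a /\ inv (y * a) = y * a.
Definition MP_invertible (R : pzRingType) (inv : R -> R) (a : R) : Prop :=
  exists y : R, a * y * a = a /\ y * a * y = y /\
    inv (a * y) = a * y /\ inv (y * a) = y * a.

(* Main.v *)
Require Import Defs.
From mathcomp Require Import all_boot all_algebra.
Local Open Scope ring_scope.
Import GRing.Theory.
Lemma l14 (R : pzRingType) (inv : R -> R) (a : R) : involution inv ->
  left_bc_invertible a (inv a) 1 <-> exists y, inverse14 inv a y.
Proof.
move=> [K [M _]]; split.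
- move=> [y [_ H]].
  have H' : a * inv a * inv y = a.
    by have := congr1 inv H; rewrite !M K mulrA.
  have S : inv (y * a) = y * a.
    by rewrite M -{1}H -!mulrA (mulrA a) H'.
  exists y; split => //. by rewrite -mulrA -S M mulrA H'.
- move=> [y [H1 H2]]; exists y; split.
    by move=> r; exists (r * y); rewrite mulr1.
  by rewrite -{3}H1 -(mulrA a y a) M H2.
Qed.

Lemma r13 (R : pzRingType) (inv : R -> R) (a : R) : involution inv ->
  right_bc_invertible a 1 (inv a) <-> exists y, inverse13 inv a y.
Proof.
move=> [K [M _]]; split.
- move=> [y [_ H]].
  have H' : inv y * inv a * a = a.
    by have := congr1 inv H; rewrite !M K mulrA.
  have S : inv (a * y) = a * y.
    by rewrite M -{1}H !mulrA H'.
  exists y; split => //. by rewrite -S M H'.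
- move=> [y [H1 H2]]; exists y; split.
    by move=> r; exists (y * r); rewrite mul1r.
  by rewrite -{3}H1 M H2 mulrA.
Qed.

Theorem proposition2p17 (R : pzRingType) (inv : R -> R) (a : R) :
  involution inv ->
  (left_bc_invertible a (inv a) 1 <-> exists y, inverse14 inv a y) /\
  (right_bc_invertible a 1 (inv a) <-> exists y, inverse13 inv a y) /\
  (MP_invertible inv a <->
     left_bc_invertible a (inv a) 1 /\ right_bc_invertible a 1 (inv a)).
Proof.
move=> I; have L := @l14 _ _ a I; have Rr := @r13 _ _ a I.
split => //; split => //; split.
- move=> [y [H1 [H2 [H3 H4]]]]; split; [apply/L|apply/Rr]; by exists y.
- move=> [/L [y4 [A1 A2]] /Rr [y3 [B1 B2]]].
  exists (y4 * a * y3); split; [|split; [|split]].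
  + by rewrite !mulrA A1 B1.
  + rewrite !mulrA -(mulrA (y4*a) y3 a) -(mulrA y4 a (y3*a)) (mulrA a y3 a) B1.
    by rewrite -(mulrA y4 a y4) -(mulrA y4 (a*y4) a) A1.
  + by rewrite !mulrA A1.
  + by rewrite -(mulrA _ y3) -mulrA (mulrA a) B1.
Qed.
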